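(* Let $k_+,k_-$ be integers with $0\leq k_-\leq k_+\leq 3$ and $k_++k_-\geq 1$, and set $\alpha \triangleq \max\{2k_+^2,3\}$. Let $D \geq 2$ and $K\geq 1$ be integers, and let $p\equiv\pm 5\pmod{12}$ be a prime such that $(\alpha K+1)^D \leq p$. For each integer $0\leq m < DK^2$ define \[C_m\triangleq \Big\{ x= \sum_{i=0}^{D-1} x_i (\alpha K+1)^i : x_i\in\mathbb{Z},\ 0\leq x_i\leq K,\ \sum_{i=0}^{D-1}x_i^2=m \Big\}. \] Let $G \triangleq \mathbb{Z}_{3k_++2k_-+1} \times \mathbb{Z}_p\times \mathbb{Z}_p$ and \[ S_m\triangleq \{ s_x : x \in C_m \}, \quad \text{where } s_x \triangleq (1,x \bmod p,x^2 \bmod p) \in G.\] Then $G\geq M\diamond_2 S_m$ for every $0\leq m < DK^2$, where $M\triangleq [-k_-,k_+]^*$.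
   Context: $[a,b]=\{a,a+1,\dots,b\}$ and $[a,b]^*=[a,b]\setminus\{0\}$. For a finite Abelian group $G$, a finite set $M\subseteq\mathbb{Z}\setminus\{0\}$ and $S=\{s_1,\dots,s_n\}\subseteq G$, we write $G\ge M\diamond_t S$ if the elements $\mathbf{e}\cdot(s_1,\dots,s_n)=\sum_i e_is_i$, over all $\mathbf{e}\in(M\cup\{0\})^n$ with $1\le\mathrm{wt}(\mathbf{e})\le t$, are all distinct and non-zero in $G$ (here $e_is_i$ is the $e_i$-fold group multiple and $\mathrm{wt}$ the Hamming weight). *)

(* Defs.v *)
From HB Require Import structures.
From mathcomp Require Import all_boot all_order all_algebra.
Set Implicit Arguments. Unset Strict Implicit. Unset Printing Implicit Defensive.
Import Order.TTheory GRing.Theory Num.Theory.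
Local Open Scope ring_scope.

(* S = {s_1,...,s_n} is given as a duplicate-free sequence; e ranges over
   coefficient vectors indexed by positions 'I_n (n = size S). *)
Definition wt (n : nat) (e : {ffun 'I_n -> int}) : nat :=
  #|[set i | e i != 0]|.

Definition admissible (n : nat) (M : {pred int}) (t : nat)
    (e : {ffun 'I_n -> int}) : Prop :=
  (forall i, e i != 0 -> e i \in M) /\ (1 <= wt e <= t)%N.

Definition combo (G : zmodType) (S : seq G) (e : {ffun 'I_(size S) -> int}) : G :=
  \sum_(i < size S) S`_i *~ e i.

Definition diamond (G : zmodType) (M : {pred int}) (t : nat) (S : seq G) : Prop :=
  forall e e' : {ffun 'I_(size S) -> int},
    admissible M t e -> admissible M t e' ->
    combo e != 0 /\ (e != e' -> combo e != combo e').

Definition Mset (kp km : nat) : {pred int} :=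
  [pred z : int | (- (km%:Z) <= z <= kp%:Z) && (z != 0)].

Definition alpha (kp : nat) : nat := maxn (2 * kp ^ 2) 3.

Definition Gtype (kp km p : nat) : zmodType :=
  ('Z_(3 * kp + 2 * km + 1) * 'Z_p * 'Z_p)%type.

Definition s_x (kp km p : nat) (x : nat) : Gtype kp km p :=
  (1, x%:R, (x ^ 2)%N%:R).

Definition Cval (kp K D : nat) (xs : {ffun 'I_D -> 'I_K.+1}) : nat :=
  \sum_(i < D) (xs i : nat) * (alpha kp * K + 1) ^ i.

Definition C_m (kp K D m : nat) : seq nat :=
  undup [seq Cval kp xs | xs : {ffun 'I_D -> 'I_K.+1} <- enum {ffun 'I_D -> 'I_K.+1}
                        & (\sum_(i < D) (xs i : nat) ^ 2)%N == m].

Definition S_m (kp km p K D m : nat) : seq (Gtype kp km p) :=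
  undup [seq s_x kp km p x | x <- C_m kp K D m].

(* Main.v *)
Require Import Defs.
From HB Require Import structures.
From mathcomp Require Import all_boot all_order all_algebra.
From mathcomp Require Import all_fingroup all_solvable all_field.
From mathcomp Require Import ring lra zify.
Set Implicit Arguments. Unset Strict Implicit. Unset Printing Implicit Defensive.
Import Order.TTheory GRing.Theory Num.Theory.

Module Aux.
Local Open Scope ring_scope.

Ltac zlia := repeat match goal with H : context [dvdz] |- _ => clear H end; lia.

Section QR.
Variable p : nat.
Hypothesis pr : prime p.
Local Notation F := ('F_p).
Local Open Scope ring_scope.

Lemma uvalX (u : {unit F}) n : val (u ^+ n)%g = val u ^+ n.
Proof. elim: n => [|n IH] //. by rewrite expgS exprS -IH. Qed.

Lemma exists_order (d : nat) : (0 < d)%N -> (d %| p.-1)%N ->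
  exists u : {unit F}, (#[u])%g = d.
Proof.
move=> d0 hd.
have /cyclicP [g Hg] := field_unit_group_cyclic [set: {unit F}]%G.
have og : (#[g])%g = p.-1.
  by rewrite orderE -Hg card_finField_unit card_Fp.
have hd' : (p.-1 %/ d %| #[g]%g)%N by rewrite og; apply/dvdnP; exists d; rewrite mulnC divnK.
have p1 : (0 < p.-1)%N by have := prime_gt1 pr; case: p.
exists (g ^+ (p.-1 %/ d))%g; rewrite orderXdiv // og.
have q0 : (0 < p.-1 %/ d)%N by rewrite divn_gt0 // dvdn_leq.
by rewrite -{1}(divnK hd) mulKn.
Qed.

Lemma natF0 n : ((n%:R : F) == 0) = (p %| n)%N.
Proof. by rewrite -(dvdn_pcharf (pchar_Fp pr)). Qed.

Hypothesis p12 : ((p %% 12 == 5) || (p %% 12 == 7))%N.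

Lemma p_gt3 : (3 < p)%N.
Proof.
have := prime_gt1 pr; case/orP: p12 => /eqP h.
  case: p h pr => [|[|[|[|]]]] //.
case: p h pr => [|[|[|[|]]]] //.
Qed.

Lemma natF_neq0 n : (0 < n < p)%N -> (n%:R : F) != 0.
Proof.
case/andP => h1 h2; rewrite natF0; apply/negP => /(dvdn_leq h1); lia.
Qed.

Lemma twoF : (2%:R : F) != 0.
Proof. rewrite natF_neq0 //; have := p_gt3; lia. Qed.

Lemma threeF : (3%:R : F) != 0.
Proof. rewrite natF_neq0 //; have := p_gt3; lia. Qed.

Lemma fermatF (x : F) : x ^+ p = x.
Proof. by have := expf_card x; rewrite card_Fp. Qed.

Lemma no_sqrt_m1 : (p %% 4 = 3)%N -> forall x : F, x ^+ 2 != -1.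
Proof.
move=> h x; apply/eqP => hx.
have ep : p = (4 * (p %/ 4) + 3)%N by rewrite {1}(divn_eq p 4) h mulnC.
have : x ^+ (4 * (p %/ 4) + 3) = x by rewrite -ep fermatF.
rewrite exprD exprM.
have -> : x ^+ 4 = 1 by rewrite (_ : 4 = 2 * 2)%N // exprM hx; ring.
rewrite expr1n mul1r (_ : 3 = 2 + 1)%N // exprD hx expr1 => /eqP.
rewrite -subr_eq0 (_ : -1 * x - x = - (2%:R * x)); last by ring.
rewrite oppr_eq0 mulf_eq0 (negPf twoF) /= => /eqP x0.
move: hx; rewrite x0 expr0n /= => /eqP; rewrite eq_sym oppr_eq0 oner_eq0.
done.
Qed.

Lemma no_sqrt_m3 : (p %% 3 = 2)%N -> forall x : F, x ^+ 2 != -3%:R.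
Proof.
move=> h x; apply/eqP => hx.
pose w : F := (x - 1) / 2%:R.
have hw : w ^+ 2 + w + 1 = 0.
  have -> : w ^+ 2 + w + 1 = (x ^+ 2 + 3%:R) / (2%:R * 2%:R).
    rewrite /w; field; rewrite !natF_neq0 //; have := p_gt3; lia.
  by rewrite hx addNr mul0r.
have hw3 : w ^+ 3 = 1.
  have e : w ^+ 3 - 1 = (w - 1) * (w ^+ 2 + w + 1) by ring.
  by apply/eqP; rewrite -subr_eq0 e hw mulr0.
have ep : p = (3 * (p %/ 3) + 2)%N by rewrite {1}(divn_eq p 3) h mulnC.
have : w ^+ (3 * (p %/ 3) + 2) = w by rewrite -ep fermatF.
rewrite exprD exprM hw3 expr1n mul1r => /eqP.
rewrite -subr_eq0 (_ : w ^+ 2 - w = w * (w - 1)); last by ring.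
rewrite mulf_eq0 subr_eq0 => /orP [] /eqP w0; move: hw; rewrite w0.
  by rewrite expr0n /= !add0r => /eqP; rewrite oner_eq0.
rewrite expr1n (_ : (1 + 1 + 1 : F) = 3%:R); last by ring.
by move/eqP; rewrite (negPf threeF).
Qed.

Lemma sqrt_m1 : (p %% 4 = 1)%N -> exists x : F, x ^+ 2 = -1.
Proof.
move=> h.
have [|u ou] := @exists_order 4 isT.
  by rewrite {1}(divn_eq p 4) h addn1 /= dvdn_mull.
exists (val u).
have h4 : val u ^+ 4 = 1 by rewrite -uvalX -ou expg_order.
have h2 : val u ^+ 2 != 1.
  rewrite -uvalX; apply/negP => /eqP h2.
  have : (u ^+ 2 == 1)%g by apply/eqP; apply: val_inj; rewrite h2.
  by rewrite -order_dvdn ou.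
apply/eqP; move: h4 => /eqP; rewrite -subr_eq0.
rewrite (_ : val u ^+ 4 - 1 = (val u ^+ 2 - 1) * (val u ^+ 2 + 1)); last by ring.
rewrite mulf_eq0 subr_eq0 (negPf h2) /= addr_eq0 => //.
Qed.

Lemma sqrt_m3 : (p %% 3 = 1)%N -> exists x : F, x ^+ 2 = -3%:R.
Proof.
move=> h.
have [|u ou] := @exists_order 3 isT.
  by rewrite {1}(divn_eq p 3) h addn1 /= dvdn_mull.
have h3 : val u ^+ 3 = 1 by rewrite -uvalX -ou expg_order.
have h1 : val u != 1.
  apply/negP => /eqP h1.
  have : (u ^+ 1 == 1)%g by apply/eqP; apply: val_inj; rewrite uvalX expr1 h1.
  by rewrite -order_dvdn ou.
have hw : val u ^+ 2 + val u + 1 = 0.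
  move: h3 => /eqP; rewrite -subr_eq0.
  rewrite (_ : val u ^+ 3 - 1 = (val u - 1) * (val u ^+ 2 + val u + 1)); last by ring.
  by rewrite mulf_eq0 subr_eq0 (negPf h1) /= => /eqP.
exists (2%:R * val u + 1).
rewrite (_ : (2%:R * val u + 1) ^+ 2 = 4%:R * (val u ^+ 2 + val u + 1) - 3%:R); last first.
  by ring.
by rewrite hw mulr0 sub0r.
Qed.

Lemma no_sqrt3 (x : F) : x ^+ 2 != 3%:R.
Proof.
apply/negP => /eqP hx.
have x0 : x != 0 by apply/eqP => x0; move: hx; rewrite x0 expr0n /= => /eqP; rewrite eq_sym (negPf threeF).
case/orP: p12 => /eqP h.
  have h4 : (p %% 4 = 1)%N by rewrite -(modn_dvdm _ (isT : 4 %| 12)%N) h.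
  have h3 : (p %% 3 = 2)%N by rewrite -(modn_dvdm _ (isT : 3 %| 12)%N) h.
  have [i hi] := sqrt_m1 h4.
  have := no_sqrt_m3 h3 (i * x).
  by rewrite exprMn hi hx mulN1r eqxx.
have h4 : (p %% 4 = 3)%N by rewrite -(modn_dvdm _ (isT : 4 %| 12)%N) h.
have h3 : (p %% 3 = 1)%N by rewrite -(modn_dvdm _ (isT : 3 %| 12)%N) h.
have [y hy] := sqrt_m3 h3.
have := no_sqrt_m1 h4 (y / x).
by rewrite expr_div_n hy hx mulNr (divff threeF) eqxx.
Qed.

End QR.

Lemma no_sqrt3_int (p : nat) (pr : prime p) (p12 : ((p %% 12 == 5) || (p %% 12 == 7))%N)
  (U W : int) : (p%:Z %| U ^+ 2 - 3 * W ^+ 2)%Z -> (p%:Z %| W)%Z.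
Proof.
rewrite !(dvdz_pcharf (pchar_Fp pr)) => h; apply/negPn/negP => w0.
have := no_sqrt3 pr p12 ((U%:~R : 'F_p) / W%:~R).
move: h; rewrite rmorphB !rmorphM /= subr_eq0 => /eqP e.
rewrite expr_div_n !expr2 e -mulrA divff ?mulr1 ?mulf_neq0 //.
by rewrite eqxx.
Qed.

Definition L6 : seq int := [:: -3; -2; -1; 1; 2; 3].
Definition P6 (u1 u2 v1 v2 : int) : bool :=
  (u1 + u2 == v1 + v2) ==> (u1 + u2 != 0) ==> (u1 * u2 != v1 * v2) ==>
  (0 < u1 * u2 * (v1 * v2)) ==>
  [|| (u1 * u2 == -2) && (v1 * v2 == -6), (u1 * u2 == -6) && (v1 * v2 == -2),
      (u1 * u2 == 3) && (v1 * v2 == 4) | (u1 * u2 == 4) && (v1 * v2 == 3)].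

Lemma P6_all : all (fun u1 => all (fun u2 => all (fun v1 => all (fun v2 => P6 u1 u2 v1 v2) L6) L6) L6) L6.
Proof. by vm_compute. Qed.

Lemma inL6 (u : int) : -3 <= u <= 3 -> u != 0 -> u \in L6.
Proof. move=> h1 h2; rewrite !inE; lia. Qed.

Lemma enum_case (u1 u2 v1 v2 : int) :
  -3 <= u1 <= 3 -> -3 <= u2 <= 3 -> -3 <= v1 <= 3 -> -3 <= v2 <= 3 ->
  u1 != 0 -> u2 != 0 -> v1 != 0 -> v2 != 0 ->
  u1 + u2 = v1 + v2 -> u1 + u2 != 0 -> u1 * u2 != v1 * v2 -> 0 < u1 * u2 * (v1 * v2) ->
  [\/ u1 * u2 = -2 /\ v1 * v2 = -6, u1 * u2 = -6 /\ v1 * v2 = -2,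
      u1 * u2 = 3 /\ v1 * v2 = 4 | u1 * u2 = 4 /\ v1 * v2 = 3].
Proof.
move=> h1 h2 h3 h4 n1 n2 n3 n4 hs s0 hP hpos.
have := P6_all => /allP /(_ u1 (inL6 h1 n1)) /allP /(_ u2 (inL6 h2 n2)).
move=> /allP /(_ v1 (inL6 h3 n3)) /allP /(_ v2 (inL6 h4 n4)).
rewrite /P6 hs eqxx -hs s0 hP hpos /=.
by case/or4P => /andP [/eqP -> /eqP ->]; [constructor 1|constructor 2|constructor 3|constructor 4].
Qed.

Lemma sum_digits_bound D (b : int) (d : 'I_D -> int) : 1 <= b ->
  (forall i, `|d i| <= b - 1) -> `|\sum_(i < D) d i * b ^+ i| <= b ^+ D - 1.
Proof.
elim: D d => [|D IH] d b1 hd; first by rewrite big_ord0 normr0 expr0 subrr.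
rewrite big_ord_recl /= expr0 mulr1.
have -> : \sum_(i < D) d (lift ord0 i) * b ^+ (bump 0 i) = b * \sum_(i < D) d (lift ord0 i) * b ^+ i.
  by rewrite mulr_sumr; apply: eq_bigr => i _; rewrite /bump /= exprS; ring.
have := IH (fun i => d (lift ord0 i)) b1 (fun i => hd _).
set R := \sum_(i < D) _ => hR.
have := hd ord0; set d0 := d ord0 => h0.
apply: (le_trans (ler_normD _ _)); rewrite normrM (ger0_norm (le_trans ler01 b1)) exprS.
have := ler_wpM2l (le_trans ler01 b1) hR; nra.
Qed.

Lemma dvdz_small (p : nat) (z : int) : (p%:Z %| z)%Z -> `|z| < p%:Z -> z = 0.
Proof.
move=> hd hz; apply/eqP; apply: contraTT hz => z0; rewrite -leNgt.
move: hd; rewrite dvdzE /= => /dvdn_leq; rewrite absz_gt0 => /(_ z0).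
by rewrite -lez_nat abszE.
Qed.

Lemma digits_zero D (b : int) (d : 'I_D -> int) : 1 < b ->
  (forall i, `|d i| <= b - 1) -> \sum_(i < D) d i * b ^+ i = 0 -> forall i, d i = 0.
Proof.
elim: D d => [|D IH] d b1 hd; first by move=> _ [].
rewrite big_ord_recl /= expr0 mulr1.
have -> : \sum_(i < D) d (lift ord0 i) * b ^+ (bump 0 i) = b * \sum_(i < D) d (lift ord0 i) * b ^+ i.
  by rewrite mulr_sumr; apply: eq_bigr => i _; rewrite /bump /= exprS; ring.
set R := \sum_(i < D) _ => hs.
have e0 : d ord0 = - (b * R) by lra.
have hR : R = 0.
  have := hd ord0; rewrite e0 normrN normrM (gtr0_norm (lt_trans ltr01 b1)).
  have : 0 <= `|R| by [].
  case: (ltP 0 `|R|); last first.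
    by move=> h1 h2 _; apply/eqP; rewrite -normr_eq0 eq_le h1 h2.
  move=> h1 _; rewrite -[_ < _]/(1 <= `|R|) in h1 => h3.
  nra.
have hd0 : d ord0 = 0 by rewrite e0 hR mulr0 oppr0.
move: hs; rewrite hd0 hR add0r => _ i.
case: (unliftP ord0 i) => [j ->|->] //.
by apply: (IH (fun i => d (lift ord0 i))) => // k; apply: hd.
Qed.

Lemma EuclidZ (p : nat) (a c : int) : prime p -> (p%:Z %| a * c)%Z ->
  (p%:Z %| a)%Z \/ (p%:Z %| c)%Z.
Proof. by move=> pr; rewrite !dvdzE abszM /= Euclid_dvdM // => /orP. Qed.

Lemma ndvd_small (p : nat) (c : int) : c != 0 -> `|c| < p%:Z -> ~ (p%:Z %| c)%Z.
Proof. by move=> c0 hc /dvdz_small => /(_ hc) /eqP; rewrite (negPf c0). Qed.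

Section Core.
Variables (p : nat) (a b K m kp km : int) (D : nat).
Hypothesis pr : prime p.
Hypothesis p12 : ((p %% 12 == 5) || (p %% 12 == 7))%N.
Hypothesis Hb : b = a * K + 1.
Hypothesis Ha : 3 <= a.
Hypothesis HK : 1 <= K.
Hypothesis Hkpa : 2 * kp <= a.
Hypothesis Hkm : 0 <= km <= kp.
Hypothesis Hkp3 : kp <= 3.
Hypothesis HbD : b ^+ D <= p%:Z.
Hypothesis Hp6 : 6 < p%:Z.

Definition V (x : 'I_D -> int) := \sum_(i < D) x i * b ^+ i.
Definition dig (x : 'I_D -> int) := (forall i, 0 <= x i <= K) /\ \sum_(i < D) x i ^+ 2 = m.

Lemma b1 : 1 < b.
Proof. have h : 3 * 1 <= a * K by apply: ler_pM. rewrite Hb; lra. Qed.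

Lemma lift_digits (d : 'I_D -> int) : (forall i, `|d i| <= b - 1) ->
  (p%:Z %| V d)%Z -> forall i, d i = 0.
Proof.
move=> hd hp.
have hV : V d = 0.
  apply: (dvdz_small hp); rewrite /V; have := sum_digits_bound (ltW b1) hd.
  move: HbD; zlia.
exact: (digits_zero b1 hd hV).
Qed.

Lemma comb4 (c1 c2 c3 c4 : int) (x y z w : 'I_D -> int) :
  c1 * V x + c2 * V y + c3 * V z + c4 * V w =
  V (fun i => c1 * x i + c2 * y i + c3 * z i + c4 * w i).
Proof.
rewrite /V !mulr_sumr -!big_split /=; apply: eq_bigr => i _; ring.
Qed.

Lemma term_bound (c w : int) : 0 <= w <= K -> `|c * (2 * w - K)| <= `|c| * K.
Proof.
move=> hw; rewrite normrM ler_wpM2l // ler_norml; lra.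
Qed.

Lemma digit_bound (c1 c2 c3 c4 x y z w : int) :
  c1 + c2 + c3 + c4 = 0 -> `|c1| + `|c2| + `|c3| + `|c4| <= 2 * a ->
  0 <= x <= K -> 0 <= y <= K -> 0 <= z <= K -> 0 <= w <= K ->
  `|c1 * x + c2 * y + c3 * z + c4 * w| <= b - 1.
Proof.
move=> hs hn hx hy hz hw.
have e : 2 * (c1 * x + c2 * y + c3 * z + c4 * w) =
  c1 * (2 * x - K) + c2 * (2 * y - K) + c3 * (2 * z - K) + c4 * (2 * w - K).
  have -> : c4 = - (c1 + c2 + c3) by lra.
  ring.
have := term_bound c1 hx; have := term_bound c2 hy.
have := term_bound c3 hz; have := term_bound c4 hw.
move=> h4 h3 h2 h1.
have h : `|2 * (c1 * x + c2 * y + c3 * z + c4 * w)| <= (`|c1| + `|c2| + `|c3| + `|c4|) * K.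
  rewrite e; apply: (le_trans (ler_normD _ _)).
  apply: (le_trans (lerD (le_trans (ler_normD _ _) (lerD (ler_normD _ _) (lexx _))) (lexx _))).
  lra.
move: h; rewrite normrM (ger0_norm (_ : 0 <= 2 :> int)) // Hb.
have : (`|c1| + `|c2| + `|c3| + `|c4|) * K <= 2 * a * K by rewrite ler_wpM2r //; lra.
lra.
Qed.

Lemma lin4 (c1 c2 c3 c4 : int) (x y z w : 'I_D -> int) :
  dig x -> dig y -> dig z -> dig w ->
  c1 + c2 + c3 + c4 = 0 -> `|c1| + `|c2| + `|c3| + `|c4| <= 2 * a ->
  (p%:Z %| c1 * V x + c2 * V y + c3 * V z + c4 * V w)%Z ->
  forall i, c1 * x i + c2 * y i + c3 * z i + c4 * w i = 0.
Proof.
move=> [hx _] [hy _] [hz _] [hw _] hs hn; rewrite comb4 => /lift_digits; apply.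
by move=> i; apply: digit_bound.
Qed.

Lemma ndvd6 (c : int) : c != 0 -> `|c| <= 6 -> ~ (p%:Z %| c)%Z.
Proof. move=> c0 hc; apply: ndvd_small c0 _; move: Hp6; zlia. Qed.

Lemma eqV (x y : 'I_D -> int) : dig x -> dig y -> (p%:Z %| V x - V y)%Z -> V x = V y.
Proof.
move=> hx hy hd.
have H1 : 1 + -1 + 0 + 0 = 0 :> int by [].
have H2 : `|1 : int| + `|-1 : int| + `|0 : int| + `|0 : int| <= 2 * a.
  have -> : `|1 : int| + `|-1 : int| + `|0 : int| + `|0 : int| = 2 by [].
  zlia.
have H3 : (p%:Z %| 1 * V x + -1 * V y + 0 * V x + 0 * V x)%Z.
  by rewrite (_ : 1 * V x + -1 * V y + 0 * V x + 0 * V x = V x - V y) //; ring.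
have h := @lin4 1 (-1) 0 0 x y x x hx hy hx hx H1 H2 H3.
rewrite /V; apply: eq_bigr => i _; have -> // : x i = y i by move: (h i); zlia.
Qed.

Lemma sig_pos (x y : 'I_D -> int) : V x != V y -> 0 < \sum_(i < D) (x i - y i) ^+ 2.
Proof.
move=> nxy; rewrite lt_def sumr_ge0 ?andbT; last by move=> i _; rewrite sqr_ge0.
apply: contra nxy; rewrite psumr_eq0; last by move=> i _; rewrite sqr_ge0.
move=> /allP h; apply/eqP; rewrite /V; apply: eq_bigr => i _.
have := h i (mem_index_enum _); rewrite sqrf_eq0 subr_eq0 => /eqP -> //.
Qed.

Lemma sumsq_id (u1 u2 : int) (x y : 'I_D -> int) : dig x -> dig y ->
  \sum_(i < D) (u1 * x i + u2 * y i) ^+ 2 =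
  (u1 + u2) ^+ 2 * m - u1 * u2 * \sum_(i < D) (x i - y i) ^+ 2.
Proof.
move=> [_ hx] [_ hy].
have -> : (u1 + u2) ^+ 2 * m = (u1 + u2) * (u1 * \sum_(i < D) x i ^+ 2 + u2 * \sum_(i < D) y i ^+ 2).
  rewrite hx hy; ring.
have -> : (u1 + u2) * (u1 * \sum_(i < D) x i ^+ 2 + u2 * \sum_(i < D) y i ^+ 2) -
   u1 * u2 * \sum_(i < D) (x i - y i) ^+ 2 =
   \sum_(i < D) ((u1 + u2) * (u1 * x i ^+ 2 + u2 * y i ^+ 2) - u1 * u2 * (x i - y i) ^+ 2).
  by rewrite sumrB -!mulr_sumr big_split /= -!mulr_sumr.
by apply: eq_bigr => i _; ring.
Qed.

Lemma dvd_sq (X : int) : (p%:Z %| X ^+ 2)%Z -> (p%:Z %| X)%Z.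
Proof. by rewrite expr2 => /(EuclidZ pr) []. Qed.

Definition inM (u : int) := - km <= u <= kp.

Lemma inM_abs u : inM u -> `|u| <= kp.
Proof. rewrite /inM => h; rewrite ler_norml; zlia. Qed.

Lemma coef_bound (u1 u2 v1 v2 : int) : inM u1 -> inM u2 -> inM v1 -> inM v2 ->
  `|u1| + `|u2| + `|- v1| + `|- v2| <= 2 * a.
Proof.
move=> /inM_abs h1 /inM_abs h2 /inM_abs h3 /inM_abs h4; rewrite !normrN; zlia.
Qed.

Lemma w1w2 (u1 v1 v2 : int) (x z w : 'I_D -> int) : dig x -> dig z -> dig w ->
  v1 != 0 -> v2 != 0 -> inM v1 -> inM v2 -> V z != V w -> u1 = v1 + v2 ->
  (p%:Z %| u1 * V x - (v1 * V z + v2 * V w))%Z ->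
  (p%:Z %| u1 * V x ^+ 2 - (v1 * V z ^+ 2 + v2 * V w ^+ 2))%Z -> False.
Proof.
move=> hx hz hw v10 v20 hv1 hv2 nzw hu hL hQ.
set X := V x in hL hQ; set Z := V z in hL hQ nzw; set W := V w in hL hQ nzw.
have : (p%:Z %| v1 * v2 * (Z - W) * (Z - W))%Z.
  have -> : v1 * v2 * (Z - W) * (Z - W) =
    (- u1) * (u1 * X ^+ 2 - (v1 * Z ^+ 2 + v2 * W ^+ 2)) +
    (u1 * X - (v1 * Z + v2 * W)) * (u1 * X + (v1 * Z + v2 * W)).
    rewrite hu; ring.
  by apply: rpredD; [apply: dvdz_mull | apply: dvdz_mulr].
have hv1' := inM_abs hv1; have hv2' := inM_abs hv2.
move=> /(EuclidZ pr) [/(EuclidZ pr) [/(EuclidZ pr) [] |] |].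
- by apply: ndvd6 => //; zlia.
- by apply: ndvd6 => //; zlia.
- by move/(eqV hz hw)/eqP; rewrite (negPf nzw).
- by move/(eqV hz hw)/eqP; rewrite (negPf nzw).
Qed.

Lemma sum_lin (F G : 'I_D -> int) (c1 c2 : int) :
  \sum_(i < D) (c1 * F i + c2 * G i) = c1 * \sum_(i < D) F i + c2 * \sum_(i < D) G i.
Proof. by rewrite big_split /= -!mulr_sumr. Qed.

Lemma pair_sq (x y z w : 'I_D -> int) : dig x -> dig y -> dig z -> dig w ->
  (forall i, x i + y i = z i + w i) ->
  \sum_(i < D) (x i - y i) ^+ 2 = \sum_(i < D) (z i - w i) ^+ 2.
Proof.
move=> [_ hx] [_ hy] [_ hz] [_ hw] h.
apply/eqP; rewrite -subr_eq0 -sumrB.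
have -> : \sum_(i < D) ((x i - y i) ^+ 2 - (z i - w i) ^+ 2) =
  \sum_(i < D) (2 * (x i ^+ 2 + y i ^+ 2) - 2 * (z i ^+ 2 + w i ^+ 2)).
  apply: eq_bigr => i _; have -> : w i = x i + y i - z i by move: (h i); zlia.
  ring.
rewrite sumrB -!mulr_sumr !big_split /= hx hy hz hw; apply/eqP; ring.
Qed.

Lemma sq_scale (u : int) (F : 'I_D -> int) :
  \sum_(i < D) (u * F i) ^+ 2 = u ^+ 2 * \sum_(i < D) F i ^+ 2.
Proof. by rewrite mulr_sumr; apply: eq_bigr => i _; rewrite exprMn. Qed.

Lemma eq_of_pw (x z : 'I_D -> int) : (forall i, x i = z i) -> V x = V z.
Proof. by move=> h; rewrite /V; apply: eq_bigr => i _; rewrite h. Qed.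

Lemma same_coeffs (u1 u2 : int) (x y z w : 'I_D -> int) :
  dig x -> dig y -> dig z -> dig w ->
  u1 != 0 -> u2 != 0 -> u1 + u2 != 0 -> V x != V y -> V z != V w ->
  (forall i, u1 * x i + u2 * y i - u1 * z i - u2 * w i = 0) ->
  (p%:Z %| (V x - V y) ^+ 2 - (V z - V w) ^+ 2)%Z ->
  (V x = V z /\ V y = V w) \/ (u1 = u2 /\ V x = V w /\ V y = V z).
Proof.
move=> hx hy hz hw u10 u20 s0 nxy nzw hl.
rewrite (_ : (V x - V y) ^+ 2 - (V z - V w) ^+ 2 =
   (1 * V x + -1 * V y + -1 * V z + 1 * V w) * (1 * V x + -1 * V y + 1 * V z + -1 * V w)); last by ring.
move=> /(EuclidZ pr) [] hd.
- have := @lin4 1 (-1) (-1) 1 x y z w hx hy hz hw erefl _ hd.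
  move=> /(_ _) h; have {}h : forall i, 1 * x i + -1 * y i + -1 * z i + 1 * w i = 0.
    by apply: h; apply: (@le_trans _ _ 4); [by [] | zlia].
  left; split; apply: eq_of_pw => i.
  + have e : (u1 + u2) * (x i - z i) = 0.
      rewrite -[RHS](hl i); have -> : w i = y i + z i - x i by move: (h i); zlia.
      ring.
    by move: e => /eqP; rewrite mulf_eq0 (negPf s0) /= subr_eq0 => /eqP.
  + have e : (u1 + u2) * (x i - z i) = 0.
      rewrite -[RHS](hl i); have -> : w i = y i + z i - x i by move: (h i); zlia.
      ring.
    move: e => /eqP; rewrite mulf_eq0 (negPf s0) /= subr_eq0 => /eqP.
    move: (h i); zlia.
- have := @lin4 1 (-1) 1 (-1) x y z w hx hy hz hw erefl _ hd.
  move=> /(_ _) h; have {}h : forall i, 1 * x i + -1 * y i + 1 * z i + -1 * w i = 0.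
    by apply: h; apply: (@le_trans _ _ 4); [by [] | zlia].
  have hs : forall i, x i + z i = y i + w i by move=> i; move: (h i); zlia.
  have T12 := pair_sq hx hz hy hw hs.
  have hu : forall i, u1 * (x i - z i) = u2 * (w i - y i).
    move=> i; apply/eqP; rewrite -subr_eq0 -[X in _ == X](hl i); apply/eqP; ring.
  have : u1 ^+ 2 * \sum_(i < D) (x i - z i) ^+ 2 = u2 ^+ 2 * \sum_(i < D) (y i - w i) ^+ 2.
    rewrite -!sq_scale; apply: eq_bigr => i _; rewrite hu; ring.
  rewrite -T12 => /eqP; rewrite -subr_eq0 -mulrBl mulf_eq0 => /orP [].
    rewrite subr_eq0 -subr_eq0 (_ : u1 ^+ 2 - u2 ^+ 2 = (u1 - u2) * (u1 + u2)); last by ring.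
    rewrite mulf_eq0 (negPf s0) orbF subr_eq0 => /eqP e12.
    right; split => //; split; apply: eq_of_pw => i.
      have := hu i; rewrite e12 => /eqP; rewrite -subr_eq0 -mulrBr mulf_eq0 (negPf u20) /=.
      move=> /eqP; move: (h i); zlia.
    have := hu i; rewrite e12 => /eqP; rewrite -subr_eq0 -mulrBr mulf_eq0 (negPf u20) /=.
    move=> /eqP; move: (h i); zlia.
  rewrite psumr_eq0; last by move=> i _; rewrite sqr_ge0.
  move=> /allP hxz; exfalso; move/eqP: nxy; apply; apply: eq_of_pw => i.
  have := hxz i (mem_index_enum _); rewrite sqrf_eq0 subr_eq0 => /eqP exz.
  have := hu i; rewrite exz subrr mulr0 => /esym/eqP; rewrite mulf_eq0 (negPf u20) /= subr_eq0 => /eqP.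
  move: (h i); rewrite exz; zlia.
Qed.

Lemma inM3 u : inM u -> -3 <= u <= 3.
Proof. rewrite /inM; zlia. Qed.

Lemma ndvdM (u : int) : u != 0 -> inM u -> ~ (p%:Z %| u)%Z.
Proof. move=> u0 /inM_abs h; apply: ndvd6 => //; zlia. Qed.

Lemma w2w2 (u1 u2 v1 v2 : int) (x y z w : 'I_D -> int) :
  dig x -> dig y -> dig z -> dig w ->
  u1 != 0 -> u2 != 0 -> v1 != 0 -> v2 != 0 ->
  inM u1 -> inM u2 -> inM v1 -> inM v2 ->
  V x != V y -> V z != V w ->
  u1 + u2 = v1 + v2 ->
  (p%:Z %| u1 * V x + u2 * V y - (v1 * V z + v2 * V w))%Z ->
  (p%:Z %| u1 * V x ^+ 2 + u2 * V y ^+ 2 - (v1 * V z ^+ 2 + v2 * V w ^+ 2))%Z ->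
  (u1 = v1 /\ u2 = v2 /\ V x = V z /\ V y = V w) \/
  (u1 = v2 /\ u2 = v1 /\ V x = V w /\ V y = V z).
Proof.
move=> hx hy hz hw u10 u20 v10 v20 hu1 hu2 hv1 hv2 nxy nzw hs hL hQ.
have hlin : forall i, u1 * x i + u2 * y i + - v1 * z i + - v2 * w i = 0.
  apply: lin4 => //; first by zlia.
    by have := coef_bound hu1 hu2 hv1 hv2.
  rewrite (_ : u1 * V x + u2 * V y + - v1 * V z + - v2 * V w =
               u1 * V x + u2 * V y - (v1 * V z + v2 * V w)) //; ring.
have hst : u1 * u2 * \sum_(i < D) (x i - y i) ^+ 2 = v1 * v2 * \sum_(i < D) (z i - w i) ^+ 2.
  have : \sum_(i < D) (u1 * x i + u2 * y i) ^+ 2 = \sum_(i < D) (v1 * z i + v2 * w i) ^+ 2.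
    apply: eq_bigr => i _; have := hlin i; have -> : u1 * x i + u2 * y i = v1 * z i + v2 * w i.
      by move: (hlin i); zlia.
    by [].
  by rewrite !sumsq_id // hs => /addrI /oppr_inj.
have sig := sig_pos nxy; have tau := sig_pos nzw.
move: hst sig tau.
set sg := \sum_(i < D) (x i - y i) ^+ 2; set ta := \sum_(i < D) (z i - w i) ^+ 2.
move=> hst sig tau.
set X := V x in hL hQ nxy *; set Y := V y in hL hQ nxy *.
set Z := V z in hL hQ nzw *; set W := V w in hL hQ nzw *.
have hQd : (p%:Z %| u1 * u2 * (X - Y) ^+ 2 - v1 * v2 * (Z - W) ^+ 2)%Z.
  have -> : u1 * u2 * (X - Y) ^+ 2 - v1 * v2 * (Z - W) ^+ 2 =
    (u1 + u2) * (u1 * X ^+ 2 + u2 * Y ^+ 2 - (v1 * Z ^+ 2 + v2 * W ^+ 2)) -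
    (u1 * X + u2 * Y - (v1 * Z + v2 * W)) * (u1 * X + u2 * Y + (v1 * Z + v2 * W)).
    have -> : v2 = u1 + u2 - v1 by zlia.
    ring.
  by apply: rpredB; [apply: dvdz_mull | apply: dvdz_mulr].
have nX : ~ (p%:Z %| X - Y)%Z by move/(eqV hx hy)/eqP; rewrite (negPf nxy).
have nZ : ~ (p%:Z %| Z - W)%Z by move/(eqV hz hw)/eqP; rewrite (negPf nzw).
case: (eqVneq (u1 + u2) 0) => [s0 | s0].
  have eu2 : u2 = - u1 by zlia.
  have ev2 : v2 = - v1 by zlia.
  have : (p%:Z %| u1 * (X - Y) * (1 * X + 1 * Y + -1 * Z + -1 * W))%Z.
    have -> : u1 * (X - Y) * (1 * X + 1 * Y + -1 * Z + -1 * W) =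
      (u1 * X ^+ 2 + u2 * Y ^+ 2 - (v1 * Z ^+ 2 + v2 * W ^+ 2)) -
      (Z + W) * (u1 * X + u2 * Y - (v1 * Z + v2 * W)).
      rewrite eu2 ev2; ring.
    by apply: rpredB => //; apply: dvdz_mull.
  case/(EuclidZ pr) => [/(EuclidZ pr) [] | ].
  - by move/(ndvdM u10 hu1).
  - by [].
  move=> hd.
  have hsum := @lin4 1 1 (-1) (-1) x y z w hx hy hz hw erefl _ hd.
  have {}hsum : forall i, 1 * x i + 1 * y i + -1 * z i + -1 * w i = 0.
    by apply: hsum; apply: (@le_trans _ _ 4); [by [] | zlia].
  have hxy : forall i, x i + y i = z i + w i by move=> i; move: (hsum i); zlia.
  have hps := pair_sq hx hy hz hw hxy.
  rewrite /sg /ta hps in hst sig *.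
  move: hst; rewrite eu2 ev2 => /eqP; rewrite -subr_eq0 -mulrBl mulf_eq0 (gt_eqF sig) orbF.
  rewrite (_ : u1 * - u1 - v1 * - v1 = (v1 - u1) * (v1 + u1)); last by ring.
  rewrite mulf_eq0 => /orP [] /eqP e.
    left; split; first by zlia.
    split; first by zlia.
    have h2 : forall i, x i = z i /\ y i = w i.
      move=> i; have := hlin i; rewrite eu2 ev2 (_ : v1 = u1) ?[RHS]e; last by zlia.
      move=> e1; have : u1 * (x i - y i - z i + w i) = 0 by rewrite -[RHS]e1; ring.
      move/eqP; rewrite mulf_eq0 (negPf u10) /= => /eqP e2.
      by move: (hsum i); zlia.
    split; apply: eq_of_pw => i; by case: (h2 i).
  right; split; first by zlia.
  split; first by zlia.
  have h2 : forall i, x i = w i /\ y i = z i.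
    move=> i; have := hlin i; rewrite eu2 ev2 (_ : v1 = - u1); last by zlia.
    move=> e1; have : u1 * (x i - y i + z i - w i) = 0 by rewrite -[RHS]e1; ring.
    move/eqP; rewrite mulf_eq0 (negPf u10) /= => /eqP e2.
    by move: (hsum i); zlia.
  split; apply: eq_of_pw => i; by case: (h2 i).
case: (eqVneq (u1 * u2) (v1 * v2)) => [eP | nP].
  have : (u1 - v1) * (u1 - v2) = 0.
    have -> : (u1 - v1) * (u1 - v2) = v1 * v2 - u1 * u2.
      have -> : v2 = u1 + u2 - v1 by zlia.
      ring.
    by rewrite eP subrr.
  have hdq : (p%:Z %| (X - Y) ^+ 2 - (Z - W) ^+ 2)%Z.
    move: hQd; rewrite -eP -mulrBr => /(EuclidZ pr) [/(EuclidZ pr) [] |] //.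
      by move/(ndvdM u10 hu1).
    by move/(ndvdM u20 hu2).
  move/eqP; rewrite mulf_eq0 => /orP [] /eqP e.
    have e1 : u1 = v1 by zlia.
    have e2 : u2 = v2 by zlia.
    have hl : forall i, u1 * x i + u2 * y i - u1 * z i - u2 * w i = 0.
      by move=> i; move: (hlin i); rewrite -e1 -e2; zlia.
    have := same_coeffs hx hy hz hw u10 u20 s0 nxy nzw hl hdq.
    case => [[e3 e4] | [e12 [e3 e4]]].
      by left; rewrite /X /Y /Z /W e3 e4.
    by right; rewrite /X /Y /Z /W e3 e4 -e1 -e2 e12.
  have e1 : u1 = v2 by zlia.
  have e2 : u2 = v1 by zlia.
  have hl : forall i, u1 * x i + u2 * y i - u1 * w i - u2 * z i = 0.
    by move=> i; move: (hlin i); rewrite -e1 -e2; zlia.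
  have nwz : V w != V z by rewrite eq_sym.
  have hdq' : (p%:Z %| (V x - V y) ^+ 2 - (V w - V z) ^+ 2)%Z.
    by rewrite (_ : (V w - V z) ^+ 2 = (Z - W) ^+ 2) //; rewrite /Z /W; ring.
  have := same_coeffs hx hy hw hz u10 u20 s0 nxy nwz hl hdq'.
  case => [[e3 e4] | [e12 [e3 e4]]].
    by right; rewrite /X /Y /Z /W e3 e4.
  by left; rewrite /X /Y /Z /W e3 e4 -e1 -e2 e12.
exfalso.
have hpos : 0 < u1 * u2 * (v1 * v2).
  have st : 0 < sg * ta by rewrite mulr_gt0.
  rewrite -(pmulr_lgt0 _ st).
  have -> : u1 * u2 * (v1 * v2) * (sg * ta) = (u1 * u2 * sg) ^+ 2.
    by rewrite expr2 {2}hst; ring.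
  rewrite lt0r sqr_ge0 andbT sqrf_eq0 !mulf_neq0 //.
  by rewrite gt_eqF.
have := enum_case (inM3 hu1) (inM3 hu2) (inM3 hv1) (inM3 hv2) u10 u20 v10 v20 hs s0 nP hpos.
have n2 : ~ (p%:Z %| 2)%Z by apply: ndvd6.
case=> [] [e1 e2]; move: hQd; rewrite e1 e2.
- rewrite (_ : -2 * (X - Y) ^+ 2 - -6 * (Z - W) ^+ 2 = -2 * ((X - Y) ^+ 2 - 3 * (Z - W) ^+ 2)); last by ring.
  case/(EuclidZ pr); first by rewrite -rpredN opprK.
  by move/(no_sqrt3_int pr p12).
- rewrite (_ : -6 * (X - Y) ^+ 2 - -2 * (Z - W) ^+ 2 = 2 * ((Z - W) ^+ 2 - 3 * (X - Y) ^+ 2)); last by ring.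
  case/(EuclidZ pr) => //.
  by move/(no_sqrt3_int pr p12).
- rewrite (_ : 3 * (X - Y) ^+ 2 - 4 * (Z - W) ^+ 2 = - ((2 * (Z - W)) ^+ 2 - 3 * (X - Y) ^+ 2)); last by ring.
  rewrite rpredN; move/(no_sqrt3_int pr p12).
  by [].
- rewrite (_ : 4 * (X - Y) ^+ 2 - 3 * (Z - W) ^+ 2 = (2 * (X - Y)) ^+ 2 - 3 * (Z - W) ^+ 2); last by ring.
  by move/(no_sqrt3_int pr p12).
Qed.

Lemma core (u1 u2 v1 v2 : int) (x y z w : 'I_D -> int) :
  dig x -> dig y -> dig z -> dig w ->
  u1 != 0 -> v1 != 0 -> inM u1 -> inM u2 -> inM v1 -> inM v2 ->
  (u2 != 0 -> V x != V y) -> (v2 != 0 -> V z != V w) ->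
  u1 + u2 = v1 + v2 ->
  (p%:Z %| u1 * V x + u2 * V y - (v1 * V z + v2 * V w))%Z ->
  (p%:Z %| u1 * V x ^+ 2 + u2 * V y ^+ 2 - (v1 * V z ^+ 2 + v2 * V w ^+ 2))%Z ->
  (u1 = v1 /\ u2 = v2 /\ V x = V z /\ (u2 = 0 \/ V y = V w)) \/
  (u1 = v2 /\ u2 = v1 /\ V x = V w /\ V y = V z).
Proof.
move=> hx hy hz hw u10 v10 hu1 hu2 hv1 hv2 nxy nzw hs hL hQ.
case: (eqVneq u2 0) => [u2z | u2n]; case: (eqVneq v2 0) => [v2z | v2n].
- move: hs hL; rewrite u2z v2z !addr0 => hs; rewrite hs.
  rewrite !mul0r !addr0 -mulrBr => /(EuclidZ pr) [/(ndvdM v10 hv1) // |].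
  move/(eqV hx hz) => e.
  by left; split => //; split => //; split => //; left.
- exfalso; move: hs hL hQ; rewrite u2z !mul0r !addr0 => hs hL hQ.
  exact: (w1w2 hx hz hw v10 v2n hv1 hv2 (nzw v2n) hs hL hQ).
- exfalso; move: hs hL hQ; rewrite v2z !mul0r !addr0 => hs hL hQ.
  apply: (w1w2 hz hx hy u10 u2n hu1 hu2 (nxy u2n) (esym hs)).
    have e : v1 * V z - (u1 * V x + u2 * V y) = - (u1 * V x + u2 * V y - v1 * V z) by ring.
    by rewrite e rpredN.
  have e : v1 * V z ^+ 2 - (u1 * V x ^+ 2 + u2 * V y ^+ 2) =
    - (u1 * V x ^+ 2 + u2 * V y ^+ 2 - v1 * V z ^+ 2) by ring.
  by rewrite e rpredN.
- have := w2w2 hx hy hz hw u10 u2n v10 v2n hu1 hu2 hv1 hv2 (nxy u2n) (nzw v2n) hs hL hQ.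
  case=> [[e1 [e2 [e3 e4]]] | h]; last by right.
  by left; split => //; split => //; split => //; right.
Qed.

End Core.

Lemma Zq0 (q : nat) (z : int) : (1 < q)%N -> ((z%:~R : 'Z_q) == 0) = (q%:Z %| z)%Z.
Proof.
move=> q1; rewrite dvdzE /=.
have h : forall n : nat, ((n%:R : 'Z_q) == 0) = (q %| n)%N.
  by move=> n; rewrite -(inj_eq val_inj) /= val_Zp_nat.
case: z => n; first by rewrite -h.
by rewrite NegzE mulrNz oppr_eq0 -h.
Qed.

Lemma fst_sum (G1 G2 : zmodType) (I : finType) (f : I -> G1 * G2) :
  (\sum_i f i).1 = \sum_i (f i).1.
Proof. exact: (big_morph fst (fun _ _ => erefl) erefl). Qed.

Lemma snd_sum (G1 G2 : zmodType) (I : finType) (f : I -> G1 * G2) :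
  (\sum_i f i).2 = \sum_i (f i).2.
Proof. exact: (big_morph snd (fun _ _ => erefl) erefl). Qed.

Lemma pair_mulz (G1 G2 : zmodType) (x : G1 * G2) (z : int) :
  x *~ z = (x.1 *~ z, x.2 *~ z).
Proof.
have h : forall n, x *+ n = (x.1 *+ n, x.2 *+ n).
  elim=> [|n IH]; first by [].
  by rewrite !mulrS IH.
case: z => n; first exact: h.
by rewrite !NegzE !mulrNz -!pmulrn h.
Qed.

Lemma natmulz (R : pzRingType) (n : nat) (z : int) : (n%:R : R) *~ z = (n%:Z * z)%:~R.
Proof. by rewrite intrM -mulrzr. Qed.

Lemma sum_rep (n : nat) (F : 'I_n -> int) (a1 a2 : 'I_n) (u1 u2 : int) :
  \sum_i F i * (u1 * (i == a1)%:R + u2 * (i == a2)%:R) = F a1 * u1 + F a2 * u2.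
Proof.
have h : forall (a : 'I_n) u, \sum_i F i * (u * (i == a)%:R) = F a * u.
  move=> a u; rewrite (bigD1 a) //= eqxx mulr1n mulr1 big1 ?addr0 // => i /negPf ->.
  by rewrite mulr0n !mulr0.
by rewrite -h -(h a2 u2) -big_split; apply: eq_bigr => i _; rewrite mulrDr.
Qed.

Lemma rep kp km n (e : {ffun 'I_n -> int}) : admissible (Mset kp km) 2 e ->
  exists a1 a2 u1 u2, [/\ u1 != 0, (u2 != 0 -> a1 != a2),
    (forall i, e i = u1 * (i == a1)%:R + u2 * (i == a2)%:R),
    inM kp%:Z km%:Z u1 & inM kp%:Z km%:Z u2].
Proof.
case=> hM; rewrite /wt; set A := [set i | e i != 0] => /andP [h1 h2].
have inA : forall i, (i \in A) = (e i != 0) by move=> i; rewrite inE.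
have hMi : forall i, e i != 0 -> inM kp km (e i).
  by move=> i /hM; rewrite /Mset inE => /andP [].
have h0 : inM kp km 0 by rewrite /inM; zlia.
have : (#|A| == 1)%N || (#|A| == 2)%N by zlia.
case/orP => [/cards1P [a hA] | /cards2P [a [a' [naa' hA]]]].
  have ea : e a != 0 by rewrite -inA hA set11.
  exists a, a, (e a), 0; split => //; last by apply: hMi.
  move=> i; rewrite mul0r addr0.
  case: (eqVneq i a) => [-> | nia]; first by rewrite ?eqxx mulr1n mulr1.
  rewrite ?(negPf nia) mulr0n mulr0; apply/eqP; rewrite -[_ == _]negbK -inA hA inE.
  by rewrite (negPf nia).
have ea : e a != 0 by rewrite -inA hA !inE eqxx.
have ea' : e a' != 0 by rewrite -inA hA !inE eqxx orbT.
exists a, a', (e a), (e a'); split => //; try by apply: hMi.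
move=> i.
case: (eqVneq i a) => [-> | nia].
  by rewrite ?eqxx (negPf naa') mulr1n mulr0n mulr1 mulr0 addr0.
case: (eqVneq i a') => [-> | nia'].
  by rewrite ?eqxx ?(negPf nia) mulr1n mulr0n mulr1 mulr0 add0r.
rewrite ?(negPf nia) ?(negPf nia') !mulr0n !mulr0 addr0; apply/eqP; rewrite -[_ == _]negbK -inA hA !inE.
by rewrite (negPf nia) (negPf nia').
Qed.

Lemma PoszX' (n k : nat) : ((n ^ k)%N : int) = (n : int) ^+ k.
Proof. by rewrite -natz natrX natz. Qed.

Lemma inM_abs' kp km (u : int) : inM kp%:Z km%:Z u -> (km <= kp)%N -> `|u| <= kp%:Z.
Proof. by rewrite /inM => h hk; rewrite ler_norml; zlia. Qed.

Lemma sum_e n (e : {ffun 'I_n -> int}) (F : 'I_n -> int) a1 a2 u1 u2 :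
  (forall i, e i = u1 * (i == a1)%:R + u2 * (i == a2)%:R) ->
  \sum_i F i * e i = F a1 * u1 + F a2 * u2.
Proof. by move=> h; rewrite -sum_rep; apply: eq_bigr => i _; rewrite h. Qed.

Theorem theorem12_aux (kp km D K p : nat) :
  (km <= kp <= 3)%N -> (1 <= kp + km)%N ->
  (2 <= D)%N -> (1 <= K)%N ->
  prime p -> ((p %% 12 == 5) || (p %% 12 == 7))%N ->
  ((alpha kp * K + 1) ^ D <= p)%N ->
  forall m : nat, (m < D * K ^ 2)%N ->
    diamond (Mset kp km) 2 (S_m kp km p K D m).
Proof.
move=> /andP [hkm hkp3] hk1 hD hK pr p12 hbD m _.
set b := (alpha kp * K + 1)%N.
have ha3 : (3 <= alpha kp)%N by rewrite /alpha leq_maxr.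
have hkpa : (2 * kp <= alpha kp)%N.
  have : (kp <= kp ^ 2)%N by rewrite expnS expn1; nia.
  rewrite /alpha; zlia.
have Hb : (b : int) = (alpha kp : int) * (K : int) + 1.
  by rewrite /b -natz natrD natrM !natz.
have Ha : 3 <= (alpha kp : int) by zlia.
have HK : 1 <= (K : int) by zlia.
have Hkpa : 2 * (kp : int) <= (alpha kp : int) by zlia.
have Hkm : 0 <= (km : int) <= kp by zlia.
have Hkp3 : (kp : int) <= 3 by zlia.
have HbD : (b : int) ^+ D <= (p : int) by rewrite -PoszX' lez_nat.
have Hp6 : 6 < (p : int).
  have : (b ^ 2 <= b ^ D)%N by rewrite leq_pexp2l // /b addn1.
  have : (4 <= b)%N by rewrite /b; nia.
  move: hbD; rewrite -/b expnS expn1; nia.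
have core' := @core p (alpha kp) b K m kp km D pr p12 Hb Ha HK Hkpa Hkm Hkp3 HbD Hp6.
have eqV' := @eqV p (alpha kp) b K m kp km D pr p12 Hb Ha HK Hkpa Hkm Hkp3 HbD Hp6.
set C := C_m kp K D m.
pose dv (xs : {ffun 'I_D -> 'I_K.+1}) := fun i : 'I_D => ((xs i : nat) : int).
have hCv : forall xs, (@Cval kp K D xs : int) = V b (dv xs).
  move=> xs; rewrite /Cval /V -/b -natz natr_sum; apply: eq_bigr => i _.
  by rewrite natrM natrX !natz.
have hCd : forall xs : {ffun 'I_D -> 'I_K.+1}, (\sum_(i < D) (xs i : nat) ^ 2 = m)%N -> dig K m (dv xs).
  move=> xs hs; split.
    by move=> i; rewrite /dv; have := ltn_ord (xs i); zlia.
  rewrite -hs -natz natr_sum; apply: eq_bigr => i _.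
  by rewrite natrX natz.
have memC : forall y, y \in C -> exists xs : {ffun 'I_D -> 'I_K.+1}, y = @Cval kp K D xs /\
    (\sum_(i < D) (xs i : nat) ^ 2 = m)%N.
  move=> y; rewrite mem_undup => /mapP [xs]; rewrite mem_filter => /andP [/eqP h _] ->.
  by exists xs.
have eqC : forall y1 y2, y1 \in C -> y2 \in C -> (p%:Z %| (y1 : int) - (y2 : int))%Z -> y1 = y2.
  move=> y1 y2 /memC [xs1 [-> h1]] /memC [xs2 [-> h2]]; rewrite !hCv => h.
  apply/eqP; rewrite -eqz_nat !hCv; apply/eqP.
  exact: eqV' (hCd _ h1) (hCd _ h2) h.
have uC : uniq C by apply: undup_uniq.
have HS : S_m kp km p K D m = map (s_x kp km p) C.
  rewrite /S_m -/C undup_id // map_inj_in_uniq // => y1 y2 h1 h2 e.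
  apply: eqC h1 h2 _; have := congr1 (fun g => g.1.2) e; rewrite /s_x /= => e'.
  rewrite -Zq0 ?prime_gt1 // rmorphB /= subr_eq0; exact/eqP.
have hn : size (S_m kp km p K D m) = size C by rewrite HS size_map.
have nthS : forall j : nat, (j < size C)%N ->
    (S_m kp km p K D m)`_j = s_x kp km p (nth 0%N C j).
  by move=> j hj; rewrite HS (nth_map 0%N).
rewrite /diamond.
set S := S_m kp km p K D m in hn nthS *.
have ltC : forall i : 'I_(size S), (i < size C)%N by move=> i; rewrite -hn ltn_ord.
pose yv (i : 'I_(size S)) : int := ((nth 0%N C i : nat) : int).
have hcombo : forall f : {ffun 'I_(size S) -> int}, combo f =
    ((\sum_i f i)%:~R, (\sum_i yv i * f i)%:~R, (\sum_i yv i ^+ 2 * f i)%:~R).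
  move=> f.
  have e1 : (combo f).1.1 = (\sum_i f i)%:~R.
    rewrite /combo !fst_sum rmorph_sum; apply: eq_bigr => i _.
    by rewrite nthS // !pair_mulz.
  have e2 : (combo f).1.2 = (\sum_i yv i * f i)%:~R.
    rewrite /combo fst_sum snd_sum rmorph_sum; apply: eq_bigr => i _.
    by rewrite nthS // !pair_mulz /= natmulz.
  have e3 : (combo f).2 = (\sum_i yv i ^+ 2 * f i)%:~R.
    rewrite /combo snd_sum rmorph_sum; apply: eq_bigr => i _.
    by rewrite nthS // !pair_mulz /= natmulz PoszX'.
  by rewrite [LHS]surjective_pairing [(combo f).1]surjective_pairing e1 e2 e3.
have injC : forall i j : 'I_(size S), yv i = yv j -> i = j.
  move=> i j /eqP; rewrite eqz_nat => /eqP h; apply: val_inj.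
  exact: (uniqP 0%N uC) _ _ (ltC i) (ltC j) h.
have hN : (1 < 3 * kp + 2 * km + 1)%N by zlia.
move=> e e' /rep [a1 [a2 [u1 [u2 [u10 ua hre hu1 hu2]]]]].
move=> /rep [c1 [c2 [v1 [v2 [v10 va hre' hv1 hv2]]]]].
have se : \sum_i e i = u1 + u2.
  by rewrite -(mul1r u1) -(mul1r u2) -(sum_e (fun _ => 1) hre); apply: eq_bigr => i _; rewrite mul1r.
have se' : \sum_i e' i = v1 + v2.
  by rewrite -(mul1r v1) -(mul1r v2) -(sum_e (fun _ => 1) hre'); apply: eq_bigr => i _; rewrite mul1r.
have hu1' := inM_abs' hu1; have hu2' := inM_abs' hu2.
have hv1' := inM_abs' hv1; have hv2' := inM_abs' hv2.
split.
  apply/eqP => h0.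
  have := congr1 (fun g => g.1.1) h0; rewrite hcombo /= se => /eqP; rewrite Zq0 // => hN1.
  case: (eqVneq u2 0) => [u2z | u2n].
    move: hN1; rewrite u2z addr0; apply: ndvd_small => //; zlia.
  have s0 : u1 + u2 = 0 by apply: (dvdz_small hN1); zlia.
  have := congr1 (fun g => g.1.2) h0; rewrite hcombo /= (sum_e _ hre) => /eqP.
  rewrite Zq0 ?prime_gt1 // (_ : u2 = - u1); last by zlia.
  rewrite (_ : yv a1 * u1 + yv a2 * - u1 = u1 * (yv a1 - yv a2)); last by ring.
  case/(EuclidZ pr); first by apply: ndvd_small => //; zlia.
  move/(eqC _ _ (mem_nth 0%N (ltC a1)) (mem_nth 0%N (ltC a2))) => /eqP.
  rewrite -eqz_nat -/(yv a1) -/(yv a2) => /eqP /injC e12.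
  by move: (ua u2n); rewrite e12 eqxx.
move=> ne; apply/negP => /eqP heq; move/negP: ne; apply; apply/eqP.
have h1 := congr1 (fun g => g.1.1) heq; have h2 := congr1 (fun g => g.1.2) heq.
have h3 := congr1 (fun g => g.2) heq.
move: h1 h2 h3; rewrite !hcombo /= se se' (sum_e _ hre) (sum_e _ hre') (sum_e _ hre) (sum_e _ hre').
move=> /eqP; rewrite -subr_eq0 -rmorphB Zq0 // => hs.
move=> /eqP; rewrite -subr_eq0 -rmorphB Zq0 ?prime_gt1 // => hL.
move=> /eqP; rewrite -subr_eq0 -rmorphB Zq0 ?prime_gt1 // => hQ.
have {}hs : u1 + u2 = v1 + v2.
  by apply/eqP; rewrite -subr_eq0; apply/eqP; apply: (dvdz_small hs); move: hu1 hu2 hv1 hv2; rewrite /inM; zlia.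
have [xa1 [ea1 da1]] := memC _ (mem_nth 0%N (ltC a1)).
have [xa2 [ea2 da2]] := memC _ (mem_nth 0%N (ltC a2)).
have [xc1 [ec1 dc1]] := memC _ (mem_nth 0%N (ltC c1)).
have [xc2 [ec2 dc2]] := memC _ (mem_nth 0%N (ltC c2)).
have ya1 : yv a1 = V b (dv xa1) by rewrite /yv ea1 hCv.
have ya2 : yv a2 = V b (dv xa2) by rewrite /yv ea2 hCv.
have yc1 : yv c1 = V b (dv xc1) by rewrite /yv ec1 hCv.
have yc2 : yv c2 = V b (dv xc2) by rewrite /yv ec2 hCv.
have nxy : u2 != 0 -> V b (dv xa1) != V b (dv xa2).
  by move=> /ua n12; rewrite -ya1 -ya2; apply: contra n12 => /eqP /injC ->.
have nzw : v2 != 0 -> V b (dv xc1) != V b (dv xc2).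
  by move=> /va n12; rewrite -yc1 -yc2; apply: contra n12 => /eqP /injC ->.
have hL' : (p%:Z %| u1 * V b (dv xa1) + u2 * V b (dv xa2) - (v1 * V b (dv xc1) + v2 * V b (dv xc2)))%Z.
  by move: hL; rewrite -ya1 -ya2 -yc1 -yc2 (mulrC u1) (mulrC u2) (mulrC v1) (mulrC v2).
have hQ' : (p%:Z %| u1 * V b (dv xa1) ^+ 2 + u2 * V b (dv xa2) ^+ 2 -
      (v1 * V b (dv xc1) ^+ 2 + v2 * V b (dv xc2) ^+ 2))%Z.
  by move: hQ; rewrite -ya1 -ya2 -yc1 -yc2 (mulrC u1) (mulrC u2) (mulrC v1) (mulrC v2).
have := core' u1 u2 v1 v2 _ _ _ _ (hCd _ da1) (hCd _ da2) (hCd _ dc1) (hCd _ dc2)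
  u10 v10 hu1 hu2 hv1 hv2 nxy nzw hs hL' hQ'.
rewrite -ya1 -ya2 -yc1 -yc2.
case=> [[e1 [e2 [/injC e3 [e4 | /injC e4]]]] | [e1 [e2 [/injC e3 /injC e4]]]];
  apply/ffunP => i; rewrite hre hre' -e1 -e2 ?e3 ?e4.
- by rewrite !mul0r.
- by [].
- by rewrite addrC.
Qed.

End Aux.

Theorem theorem12 (kp km D K p : nat) :
  (km <= kp <= 3)%N -> (1 <= kp + km)%N ->
  (2 <= D)%N -> (1 <= K)%N ->
  prime p -> ((p %% 12 == 5) || (p %% 12 == 7))%N ->
  ((alpha kp * K + 1) ^ D <= p)%N ->
  forall m : nat, (m < D * K ^ 2)%N ->
    diamond (Mset kp km) 2 (S_m kp km p K D m).
Proof. exact: Aux.theorem12_aux. Qed.
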